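(* Let $\gamma\geq0$, $G=(V,E,\omega)\in\mathcal C_\gamma$, and let $w:[0,\infty)\to\mathcal V$ be the solution of $\frac{dw}{dt}=-Lw$, $w(0)=w_0\in\mathcal V$. Let $c_1,c_2\in\mathbb R$ be such that $c_1\leq(w_0)_i\leq c_2$ for all $i\in V$. Then $c_1\leq w_i(t)\leq c_2$ for all $t\geq0$ and $i\in V$. In particular, $\|w(t)\|_{\mathcal V,\infty}\leq\|w_0\|_{\mathcal V,\infty}$ for all $t\geq0$.
   Context: $\mathcal{G}$ is the set of finite, simple, connected, undirected, edge-weighted graphs $G=(V,E,\omega)$ with $V=\{1,\dots,n\}$, $n\geq2$, weights $\omega_{ij}=\omega_{ji}>0$ on edges, $0$ otherwise. $d_i=\sum_j\omega_{ij}$. $\mathcal V$: functions $V\to\mathbb R$; $\|u\|_{\mathcal V,\infty}=\max_i|u_i|$. Fixed $r\in[0,1]$: $(\Delta u)_i=d_i^{-r}\sum_j\omega_{ij}(u_i-u_j)$, $\mathcal M(u)=\sum_id_i^ru_i$, $\mathrm{vol}(V)=\sum_id_i^r$, $\mathcal A(u)=\frac{\mathcal M(u)}{\mathrm{vol}(V)}\chi_V$. For $u\in\mathcal V$ let $\varphi$ be the unique solution of $\Delta\varphi=u-\mathcal A(u)$, $\mathcal M(\varphi)=0$, and $Lu:=\Delta u+\gamma\varphi$. Equilibrium measure $\nu^S$ ($S\subsetneq V$): unique $\nu$ with $(\Delta\nu)_i=1$ on $S$, $\nu=0$ off $S$. $f^j:=\nu^{V\setminus\{j\}}-\mathcal A(\nu^{V\setminus\{j\}})$.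 $\mathcal C^0=\{G\in\mathcal G:\forall j\ \forall i\neq j:\ \omega_{ij}>0\text{ or }f^j_i\geq0\}$; for $\gamma>0$, $\mathcal C_\gamma=\{G\in\mathcal C^0:\forall j\ \forall i\neq j:\ \omega_{ij}=0\text{ or }d_i^{-r}\omega_{ij}+\gamma\frac{d_j^r}{\mathrm{vol}(V)}f^j_i>0\}$; $\mathcal C_0:=\mathcal G$. *)

(* Defs.v *)
From HB Require Import structures.
From mathcomp Require Import all_boot all_order all_algebra.
From mathcomp Require Import all_classical all_reals all_analysis.
Set Implicit Arguments. Unset Strict Implicit. Unset Printing Implicit Defensive.
Import Order.TTheory GRing.Theory Num.Theory numFieldNormedType.Exports.
Local Open Scope ring_scope.
Local Open Scope classical_set_scope.

Section GraphDefs.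
Variables (R : realType) (n : nat).
Implicit Types (om : 'I_n -> 'I_n -> R) (u : 'I_n -> R).

Definition edge_rel om : rel 'I_n := fun i j => 0 < om i j.

Definition is_graph om : Prop :=
  (2 <= n)%N /\
  (forall i j, om i j = om j i) /\
  (forall i j, 0 <= om i j) /\
  (forall i, om i i = 0) /\
  (forall i j, connect (edge_rel om) i j).

Definition deg om (i : 'I_n) : R := \sum_(j < n) om i j.

Definition Delta (r : R) om u : 'I_n -> R :=
  fun i => powR (deg om i) (- r) * \sum_(j < n) om i j * (u i - u j).

Definition Mass (r : R) om u : R := \sum_(i < n) powR (deg om i) r * u i.

Definition vol (r : R) om : R := \sum_(i < n) powR (deg om i) r.

Definition Avg (r : R) om u : 'I_n -> R := fun _ => Mass r om u / vol r om.

Definition phi_of (r : R) om u : 'I_n -> R :=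
  xget (fun _ => 0)
    [set p | Delta r om p = (fun i => u i - Avg r om u i) /\ Mass r om p = 0].

Definition Lop (r gamma : R) om u : 'I_n -> R :=
  fun i => Delta r om u i + gamma * phi_of r om u i.

Definition eq_measure (r : R) om (S : {set 'I_n}) : 'I_n -> R :=
  xget (fun _ => 0)
    [set nu | (forall i, i \in S -> Delta r om nu i = 1) /\
              (forall i, i \notin S -> nu i = 0)].

Definition fj (r : R) om (j : 'I_n) : 'I_n -> R :=
  let nu := eq_measure r om (~: [set j]) in fun i => nu i - Avg r om nu i.

Definition in_C0 (r : R) om : Prop :=
  forall j i : 'I_n, i != j -> 0 < om i j \/ 0 <= fj r om j i.

(* C_gamma for gamma > 0, and C_0 := all graphs *)
Definition in_Cgamma (r gamma : R) om : Prop :=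
  if gamma == 0 then True else
  in_C0 r om /\
  forall j i : 'I_n, i != j ->
    om i j = 0 \/
    0 < powR (deg om i) (- r) * om i j
        + gamma * (powR (deg om j) r / vol r om) * fj r om j i.

Definition sup_norm u : R := \big[Num.max/0]_(i < n) `|u i|.

End GraphDefs.

(* Main.v *)
Require Import Defs.
From HB Require Import structures.
From mathcomp Require Import all_boot all_order all_algebra.
From mathcomp Require Import all_classical all_reals all_analysis.
From mathcomp Require Import ring lra.
Import Order.TTheory GRing.Theory Num.Theory numFieldNormedType.Exports.
Local Open Scope ring_scope.
Local Open Scope classical_set_scope.
Lemma near_right_ex (R : realType) (P : R -> Prop) (t : R) :
  (\forall x \near t^'+, P x) -> exists2 d, 0 < d & forall x, t < x < t + d -> P x.
Proof.
rewrite near_withinE => /nbhs_ballP [d d0 Hd]; exists d => // x /andP[tx xd].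
apply: Hd => //=; rewrite /ball /= ltr_norml; apply/andP; split; lra.
Qed.

Lemma near0_ex (R : realType) (P : R -> Prop) (m : R) : 0 < m ->
  (\forall x \near (0:R)^', P x) -> exists x, -m < x < 0 /\ P x.
Proof.
move=> m0; rewrite near_withinE => /nbhs_ballP [d d0 Hd].
exists (- (Num.min d m / 2)).
have h1 : 0 < Num.min d m by rewrite lt_min d0 m0.
have h2 : Num.min d m <= d by rewrite ge_min lexx.
have h3 : Num.min d m <= m by rewrite ge_min lexx orbT.
split; first (apply/andP; split; lra).
apply: Hd; last by rewrite oppr_eq0 gt_eqF // divr_gt0.
rewrite /ball /= sub0r opprK ger0_norm; lra.
Qed.

Lemma argmax_ex (R : realType) (n : nat) (f : 'I_n -> R) (i0 : 'I_n) :
  exists i, forall j, f j <= f i.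
Proof.
case: (@arg_maxP _ _ _ i0 xpredT f isT) => i _ H; exists i => j; exact: H.
Qed.

Lemma ode_max (R : realType) (n : nat) (w : R -> 'I_n -> R) (c : R) :
  (forall i, w 0 i <= c) ->
  (forall i, (fun s => w s i) x @[x --> 0^'+] --> w 0 i) ->
  (forall t, 0 < t -> forall i, derivable (fun s => w s i) t 1) ->
  (forall t, 0 < t -> forall i, (forall j, w t j <= w t i) ->
      (fun s => w s i)^`() t <= 0) ->
  forall t, 0 <= t -> forall i, w t i <= c.
Proof.
move=> H0 Hc0 Hd Hmax.
have key : forall e, 0 < e -> forall t, 0 <= t -> forall i, w t i < c + e * (1 + t).
  move=> e e0 a a0 ia; rewrite ltNge; apply/negP => Ha.
  pose A : set R := [set t | 0 <= t /\ exists i, c + e * (1 + t) <= w t i].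
  have Aa : A a by split => //; exists ia.
  have lbA : lbound A 0 by move=> y [].
  have hinf : has_inf A by split; [exists a | exists 0].
  set ts := inf A.
  have ts0 : 0 <= ts by apply: lb_le_inf => //; exists a.
  have below : forall s, 0 <= s -> s < ts -> forall i, w s i < c + e * (1 + s).
    move=> s s0 sts i; rewrite ltNge; apply/negP => Hs.
    have As : A s by split => //; exists i.
    have := ge_inf hinf.2 As; rewrite -/ts; lra.
  have cont : forall i, (fun s => w s i) x @[x --> ts^'+] --> w ts i.
    move=> i; have [->|tsp] := eqVneq ts 0; first exact: Hc0.
    have tsp' : 0 < ts by rewrite lt_neqAle eq_sym tsp ts0.
    apply: cvg_at_right_filter.
    have /derivable1_diffP/differentiable_continuous := Hd ts tsp' i.
    by [].
  have inA : A ts.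
    apply: contrapT => nA.
    have allb : forall i, w ts i < c + e * (1 + ts).
      move=> i; rewrite ltNge; apply/negP => Hs; apply: nA; split => //; by exists i.
    have : \forall x \near ts^'+, forall i, w x i < c + e * (1 + x).
      apply: filter_forall => k.
      move: (cont k) => /cvgr_lt /(_ _ (allb k)) L1.
      near=> x.
      have h1 : w x k < c + e * (1 + ts) by near: x; exact: L1.
      have h2 : ts <= x by near: x; exact: nbhs_right_ge.
      have : e * (1 + ts) <= e * (1 + x) by rewrite ler_pM2l // lerD2l.
      lra.
    move/near_right_ex => [d d0 Hdd].
    have [b Ab bd] := inf_adherent d0 hinf.
    have tsb : ts <= b by have := ge_inf hinf.2 Ab.
    have [ebt|nebt] := eqVneq b ts; first by apply: nA; rewrite -ebt.
    have tsb' : ts < b by rewrite lt_neqAle eq_sym nebt tsb.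
    have Hb := Hdd b (introT andP (conj tsb' bd)).
    case: Ab => _ [j Hj]; have := Hb j; lra.
  have tspos : 0 < ts.
    rewrite lt_neqAle ts0 andbT; apply/negP => /eqP ets.
    case: inA => _ [j]; rewrite -ets => Hj; have := H0 j; lra.
  case: inA => _ [i0 Hi0].
  have [i Hi] := @argmax_ex R n (w ts) i0.
  have D := Hmax ts tspos i Hi.
  have dv : (fun h => h^-1 *: (((fun s => w s i) \o shift ts) (h *: 1) - w ts i)) @ (0:R)^'
            --> 'D_1 (fun s => w s i) ts.
    exact: (Hd ts tspos i).
  rewrite derive1E in D.
  have Le : 'D_1 (fun s => w s i) ts < e by lra.
  move: dv => /cvgr_lt /(_ _ Le) /(@near0_ex R _ _ tspos) [h [/andP [hl hr] Hq]].
  move: Hq => /=; rewrite /shift /= -[h%:A]/(h * 1) mulr1.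
  rewrite -[h^-1 *: _]/(h^-1 * _).
  idtac.
  set X := w (h + ts) i - w ts i => HX.
  have hX : h * (h^-1 * X) = X by rewrite mulrA mulfV ?lt_eqF // mul1r.
  have HX2 : e * h < X.
    rewrite -hX; have : 0 < (e - h^-1 * X) * (- h) by apply: mulr_gt0; lra.
    lra.
  have := below (h + ts) ltac:(lra) ltac:(lra) i.
  have := Hi i0; rewrite /X in HX2; lra.
move=> t t0 i; apply/ler_addgt0Pr => eps eps0.
have t1 : 0 < 1 + t by lra.
have := key (eps / (1 + t)) (divr_gt0 eps0 t1) t t0 i.
by rewrite mulfVK ?gt_eqF // => /ltW.
Unshelve. all: by end_near.
Qed.
Section Alg.
Variables (R : realType) (n : nat) (om : 'I_n -> 'I_n -> R) (r : R).
Hypothesis Hg : is_graph om.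

Let pr i := powR (deg om i) r.

Lemma deg_pos i : 0 < deg om i.
Proof.
case: Hg => n2 [sym [pos [diag conn]]].
have [k kne] : exists k : 'I_n, k != i.
  have n0 : (0 < n)%N by apply: leq_trans n2.
  have n1 : (1 < n)%N by [].
  case: (eqVneq i (Ordinal n0)) => [->|ne]; last by exists (Ordinal n0); rewrite eq_sym.
  by exists (Ordinal n1); apply/eqP => /(congr1 val).
have /connectP [p pth lst] := conn i k.
case: p pth lst => [_ /= ke|y p /= /andP [ey _] _]; first by rewrite ke eqxx in kne.
rewrite /deg (bigD1 y) //= ltr_pwDl //; last by apply: sumr_ge0 => l _.
Qed.

Lemma pr_pos i : 0 < pr i.
Proof. exact: powR_gt0 (deg_pos i). Qed.

Lemma prN i : powR (deg om i) (- r) = (pr i)^-1.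
Proof. by rewrite powRN. Qed.

Lemma vol_pos : 0 < vol r om.
Proof.
case: Hg => n2 _; have n0 : (0 < n)%N by apply: leq_trans n2.
rewrite /vol (bigD1 (Ordinal n0)) //= ltr_pwDl ?pr_pos //.
by apply: sumr_ge0 => l _; apply: ltW; apply: pr_pos.
Qed.

Lemma DeltaE u i : Delta r om u i = (pr i)^-1 * \sum_j om i j * (u i - u j).
Proof. by rewrite /Delta prN. Qed.

Lemma Green u : \sum_i pr i * Delta r om u i = 0.
Proof.
case: Hg => _ [sym _].
under eq_bigr => i _ do rewrite DeltaE mulrA mulfV ?gt_eqF ?pr_pos // mul1r.
set S := (X in X = 0).
have : S = - S.
  rewrite {2}/S exchange_big /= -sumrN; apply: eq_bigr => i _.
  rewrite -sumrN; apply: eq_bigr => j _; rewrite sym; ring.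
lra.
Qed.

Lemma Delta_shift u c i : Delta r om (fun x => u x - c) i = Delta r om u i.
Proof. rewrite /Delta; congr (_ * _); apply: eq_bigr => j _; congr (_ * _); ring. Qed.

Lemma DeltaB u v i : Delta r om (fun x => u x - v x) i = Delta r om u i - Delta r om v i.
Proof. rewrite /Delta -mulrBr -sumrB; congr (_ * _); apply: eq_bigr => j _; ring. Qed.

Lemma DeltaN u i : Delta r om (fun x => - u x) i = - Delta r om u i.
Proof. rewrite /Delta -mulrN -sumrN; congr (_ * _); apply: eq_bigr => j _; ring. Qed.

Lemma Delta_lin (c : 'I_n -> R) (g : 'I_n -> 'I_n -> R) i :
  Delta r om (fun x => - \sum_k c k * g k x) i = - \sum_k c k * Delta r om (g k) i.
Proof.
rewrite /Delta.
set P := deg om i `^ (- r).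
transitivity (P * \sum_j \sum_k (- c k * om i j * (g k i - g k j))).
  congr (_ * _); apply: eq_bigr => j _.
  have -> : (- \sum_k c k * g k i) - (- \sum_k c k * g k j) =
     \sum_k (c k * g k j - c k * g k i) by rewrite sumrB; ring.
  rewrite mulr_sumr; apply: eq_bigr => k _; ring.
rewrite exchange_big /= mulr_sumr -sumrN; apply: eq_bigr => k _.
rewrite !mulr_sumr -sumrN; apply: eq_bigr => j _; ring.
Qed.

Lemma MassB u v : Mass r om (fun x => u x - v x) = Mass r om u - Mass r om v.
Proof. rewrite /Mass -sumrB; apply: eq_bigr => j _; ring. Qed.

Lemma Mass_lin (c : 'I_n -> R) (g : 'I_n -> 'I_n -> R) :
  Mass r om (fun x => - \sum_k c k * g k x) = - \sum_k c k * Mass r om (g k).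
Proof.
rewrite /Mass.
transitivity (\sum_j \sum_k (- c k * (powR (deg om j) r * g k j))).
  apply: eq_bigr => j _; rewrite mulrN mulr_sumr -sumrN; apply: eq_bigr => k _; ring.
rewrite exchange_big /= -sumrN; apply: eq_bigr => k _.
rewrite mulr_sumr -sumrN; apply: eq_bigr => j _; ring.
Qed.

Lemma dir_le0 (nu : 'I_n -> R) j : nu j = 0 ->
  (forall i, i != j -> Delta r om nu i = 0) -> forall k, nu k <= 0.
Proof.
case: Hg => _ [sym [pos [diag conn]]].
move=> nuj HD.
case: (@arg_maxP _ _ _ j xpredT nu isT) => i _ Hi.
set M := nu i in Hi *.
have [M0|M0] := leP M 0; first by move=> k; apply: le_trans (Hi k isT) M0.
exfalso.
have step : forall x y, edge_rel om x y -> nu x = M -> nu y = M.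
  move=> x y exy nux.
  have xj : x != j by apply/eqP => exj; move: nux; rewrite exj nuj; lra.
  have := HD x xj; rewrite DeltaE => /eqP; rewrite mulf_eq0 invr_eq0 gt_eqF ?pr_pos //=.
  move=> /eqP /psumr_eq0P H.
  have : forall k, true -> 0 <= om x k * (nu x - nu k).
    move=> k _; apply: mulr_ge0 => //; rewrite nux subr_ge0; exact: Hi.
  move=> /H {}H; have := H y isT => /eqP; rewrite mulf_eq0 => /orP [/eqP h|].
    by move: exy; rewrite /edge_rel h ltxx.
  by rewrite subr_eq0 nux => /eqP <-.
have cl : fingraph.closed (edge_rel om) [pred k | nu k == M].
  move=> x y exy; rewrite !inE; apply/idP/idP => /eqP h; apply/eqP.
    exact: step exy h.
  by apply: step h; rewrite /edge_rel sym.
have := closed_connect cl (conn i j); rewrite !inE eqxx nuj => /esym /eqP M0'.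
by move: M0; rewrite -M0' ltxx.
Qed.

Lemma dir_zero (nu : 'I_n -> R) j : nu j = 0 ->
  (forall i, i != j -> Delta r om nu i = 0) -> forall k, nu k = 0.
Proof.
move=> nuj HD k; apply/eqP; rewrite eq_le; apply/andP; split.
  exact: dir_le0 nuj HD k.
have := @dir_le0 (fun x => - nu x) j; rewrite nuj oppr0 => /(_ erefl).
have H : forall i, i != j -> Delta r om (fun x => - nu x) i = 0.
  by move=> i ij; rewrite DeltaN HD // oppr0.
by move=> /(_ H k); rewrite oppr_le0.
Qed.

Lemma DeltaE2 u i : Delta r om u i = (pr i)^-1 * (u i * deg om i - \sum_k om i k * u k).
Proof.
rewrite DeltaE; congr (_ * _); rewrite /deg mulr_sumr -sumrB.
by apply: eq_bigr => k _; ring.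
Qed.

Lemma dir_exists j : exists nu : 'I_n -> R,
  nu j = 0 /\ forall i, i != j -> Delta r om nu i = 1.
Proof.
pose A : 'M[R]_n := \matrix_(k, i) (if i == j then (k == j)%:R
                     else (pr i)^-1 * ((k == i)%:R * deg om i - om i k)).
have vA : forall v : 'rV[R]_n, forall i,
    (v *m A) 0 i = if i == j then v 0 j else Delta r om (fun k => v 0 k) i.
  move=> v i; rewrite !mxE.
  case: ifP => ij.
    rewrite (bigD1 j) //= big1 ?addr0; first by rewrite mxE ij eqxx mulr1.
    by move=> k kj; rewrite mxE ij (negbTE kj) mulr0.
  rewrite DeltaE2; set D := deg om i.
  under eq_bigr => k _ do rewrite mxE ij.
  transitivity ((pr i)^-1 * \sum_k (v 0 k * ((k == i)%:R * D) - om i k * v 0 k)).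
    rewrite mulr_sumr; apply: eq_bigr => k _.
    rewrite /D; ring.
  congr (_ * _); rewrite sumrB; congr (_ - _).
  rewrite (bigD1 i) //= eqxx big1 ?addr0; first by rewrite mul1r.
  by move=> k ki; rewrite (negbTE ki) mul0r mulr0.
have uA : A \in unitmx.
  rewrite unitmxE unitfE; apply/negP => /det0P [v v0 vA0].
  apply/negP: v0; rewrite negbK; apply/eqP/rowP => k; rewrite mxE.
  have vj : v 0 j = 0 by have := vA v j; rewrite eqxx vA0 mxE.
  apply: (@dir_zero (fun k => v 0 k) j vj) => i ij.
  by have := vA v i; rewrite (negbTE ij) vA0 mxE.
pose b : 'rV[R]_n := \row_i (if i == j then 0 else 1).
pose v := b *m invmx A.
have vAb : v *m A = b by rewrite /v mulmxKV.
exists (fun k => v 0 k); split.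
  by have := vA v j; rewrite eqxx vAb mxE eqxx.
by move=> i ij; have := vA v i; rewrite (negbTE ij) vAb mxE (negbTE ij).
Qed.

Let nuj j := @Defs.eq_measure R n r om (~: [set j]).

Lemma nuj_spec j : nuj j j = 0 /\ forall i, i != j -> Delta r om (nuj j) i = 1.
Proof.
have : [set nu | (forall i, i \in ~: [set j] -> Delta r om nu i = 1) /\
              (forall i, i \notin ~: [set j] -> nu i = 0)] (nuj j).
  apply: xgetPex; have [nu [H1 H2]] := dir_exists j; exists nu; split.
    by move=> i; rewrite !inE => /H2.
  by move=> i; rewrite !inE negbK => /eqP ->.
move=> [H1 H2]; split.
  by apply: H2; rewrite !inE eqxx.
by move=> i ij; apply: H1; rewrite !inE.
Qed.

Lemma nuj_Delta j i : Delta r om (nuj j) i =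
  if i == j then - (vol r om - pr j) / pr j else 1.
Proof.
have [H0 H1] := nuj_spec j.
case: ifP => [/eqP ->|/negbT ij]; last exact: H1.
have G := Green (nuj j); rewrite (bigD1 j) //= in G.
have S : \sum_(i | i != j) pr i * Delta r om (nuj j) i = vol r om - pr j.
  rewrite /vol [in RHS](bigD1 j) //=.
  transitivity (\sum_(i | i != j) pr i).
    by apply: eq_bigr => x xj; rewrite H1 // mulr1.
  rewrite /pr; ring.
rewrite S in G.
have pj := pr_pos j.
apply: (mulfI (lt0r_neq0 pj)).
rewrite [RHS]mulrCA mulfV ?gt_eqF // mulr1; lra.
Qed.

Lemma fj_Delta j i : Delta r om (fj r om j) i =
  if i == j then - (vol r om - pr j) / pr j else 1.
Proof. by rewrite /fj Delta_shift nuj_Delta. Qed.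

Lemma fj_Mass j : Mass r om (fj r om j) = 0.
Proof.
rewrite /fj /Avg /Mass.
under eq_bigr => i _ do rewrite mulrBr.
rewrite sumrB -mulr_suml -/(vol r om) -/(Mass r om (nuj j)).
by rewrite [X in _ - X]mulrCA mulfV ?gt_eqF ?vol_pos // mulr1 subrr.
Qed.

Lemma poisson_zero q : (forall i, Delta r om q i = 0) -> Mass r om q = 0 -> forall k, q k = 0.
Proof.
move=> HD HM k.
have cst : forall x, q x = q k.
  move=> x; apply/eqP; rewrite -subr_eq0; apply/eqP.
  apply: (@dir_zero (fun y => q y - q k) k); first by rewrite subrr.
  by move=> i _; rewrite Delta_shift.
move: HM; rewrite /Mass.
under eq_bigr => i _ do rewrite cst.
rewrite -mulr_suml -/(vol r om) => /eqP; rewrite mulf_eq0 (gt_eqF vol_pos) orFb.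
by move/eqP.
Qed.

Definition pcand u := fun i => - \sum_k u k * (pr k / vol r om) * fj r om k i.

Lemma pcand_Delta u i : Delta r om (pcand u) i = u i - Avg r om u i.
Proof.
rewrite /pcand.
rewrite (Delta_lin (fun k => u k * (pr k / vol r om)) (fun k => fj r om k)).
under eq_bigr => k _ do rewrite fj_Delta.
rewrite (bigD1 i) //= eqxx.
have -> : \sum_(k | k != i) u k * (pr k / vol r om) * (if i == k then - (vol r om - pr k) / pr k else 1)
   = \sum_(k | k != i) u k * (pr k / vol r om).
  by apply: eq_bigr => k ki; rewrite eq_sym (negbTE ki) mulr1.
rewrite /Avg /Mass.
have -> : \sum_k powR (deg om k) r * u k = pr i * u i + \sum_(k | k != i) u k * (pr k / vol r om) * vol r om.
  rewrite (bigD1 i) //=; congr (_ + _); apply: eq_bigr => k _.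
  have v0 := vol_pos; rewrite /pr; field; rewrite gt_eqF //.
rewrite -mulr_suml.
have pi := pr_pos i; have v := vol_pos.
set S := \sum_(k | k != i) _.
field; rewrite ?gt_eqF //.
Qed.

Lemma pcand_Mass u : Mass r om (pcand u) = 0.
Proof.
rewrite /pcand.
rewrite (Mass_lin (fun k => u k * (pr k / vol r om)) (fun k => fj r om k)) big1 ?oppr0 // => k _; rewrite fj_Mass mulr0 //.
Qed.

Lemma phi_ofE u : phi_of r om u = pcand u.
Proof.
apply: xget_unique; first by split; [apply/funext => i; exact: pcand_Delta | exact: pcand_Mass].
move=> q [HD HM]; apply/funext => k; apply/eqP; rewrite -subr_eq0; apply/eqP.
apply: (@poisson_zero (fun x => q x - pcand u x)).
  by move=> i; rewrite DeltaB pcand_Delta HD /= subrr.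
by rewrite MassB pcand_Mass HM subrr.
Qed.

Lemma sum_cf i : \sum_k (pr k / vol r om) * fj r om k i = 0.
Proof.
have := @poisson_zero (pcand (fun _ => 1)).
have H1 : forall i, Delta r om (pcand (fun _ => 1)) i = 0.
  move=> x; rewrite pcand_Delta /Avg /Mass.
  under eq_bigr => k _ do rewrite mulr1.
  by rewrite -/(vol r om) mulfV ?gt_eqF ?vol_pos // subrr.
move=> /(_ H1 (pcand_Mass _) i); rewrite /pcand => /eqP; rewrite oppr_eq0 => /eqP H.
by apply: etrans H; apply: eq_bigr => k _; rewrite mul1r.
Qed.

Lemma LopE gamma u i : Lop r gamma om u i =
  \sum_k (u i - u k) * (powR (deg om i) (- r) * om i k
                        + gamma * (powR (deg om k) r / vol r om) * fj r om k i).
Proof.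
rewrite /Lop phi_ofE /pcand /Delta.
have -> : - \sum_k u k * (pr k / vol r om) * fj r om k i =
   \sum_k (u i - u k) * ((pr k / vol r om) * fj r om k i).
  have := sum_cf i => S.
  have -> : \sum_k (u i - u k) * ((pr k / vol r om) * fj r om k i) =
     u i * \sum_k (pr k / vol r om) * fj r om k i - \sum_k u k * (pr k / vol r om) * fj r om k i.
    rewrite mulr_sumr -sumrB; apply: eq_bigr => k _; ring.
  by rewrite S mulr0 sub0r.
rewrite mulr_sumr mulr_sumr -big_split /=; apply: eq_bigr => k _.
rewrite /pr; ring.
Qed.


Variables (gamma : R).
Hypothesis g0 : 0 <= gamma.
Hypothesis HC : in_Cgamma r gamma om.

Lemma B_ge0 i k : k != i ->
  0 <= powR (deg om i) (- r) * om i k + gamma * (powR (deg om k) r / vol r om) * fj r om k i.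
Proof.
case: Hg => _ [_ [pos _]] ki.
case: (eqVneq gamma 0) => [->|gn0].
  by rewrite !mul0r addr0; apply: mulr_ge0 => //; apply: powR_ge0.
move: HC; rewrite /in_Cgamma (negbTE gn0) => [[C0 C]].
have ik : i != k by rewrite eq_sym.
case: (C k i ik) => [om0|]; last by apply: ltW.
case: (C0 k i ik) => [p|fpos]; first by rewrite om0 ltxx in p.
rewrite om0 mulr0 add0r; apply: mulr_ge0 => //; apply: mulr_ge0 => //.
by apply: divr_ge0; [apply: powR_ge0 | apply: ltW; apply: vol_pos].
Qed.

Lemma Lop_max u i : (forall k, u k <= u i) -> 0 <= Lop r gamma om u i.
Proof.
move=> Hu; rewrite LopE; apply: sumr_ge0 => k _.
case: (eqVneq k i) => [->|ki]; first by rewrite subrr mul0r.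
by apply: mulr_ge0; [rewrite subr_ge0 | apply: B_ge0].
Qed.

Lemma Lop_min u i : (forall k, u i <= u k) -> Lop r gamma om u i <= 0.
Proof.
move=> Hu; rewrite LopE; apply: sumr_le0 => k _.
case: (eqVneq k i) => [->|ki]; first by rewrite subrr mul0r.
by apply: mulr_le0_ge0; [rewrite subr_le0 | apply: B_ge0].
Qed.

End Alg.

Theorem corollary6p28 (R : realType) (n : nat) (om : 'I_n -> 'I_n -> R)
  (r gamma : R) (w0 : 'I_n -> R) (w : R -> 'I_n -> R) (c1 c2 : R) :
  is_graph om -> 0 <= r -> r <= 1 -> 0 <= gamma ->
  in_Cgamma r gamma om ->
  (* w solves dw/dt = - L w on [0, oo) with w(0) = w0 *)
  w 0 = w0 ->
  (forall i, (fun s => w s i) x @[x --> 0^'+] --> w 0 i) ->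
  (forall t, 0 < t -> forall i,
     derivable (fun s => w s i) t 1 /\
     (fun s => w s i)^`() t = - Lop r gamma om (w t) i) ->
  (forall i, c1 <= w0 i <= c2) ->
  (forall t, 0 <= t -> forall i, c1 <= w t i <= c2) /\
  (forall t, 0 <= t -> sup_norm (w t) <= sup_norm w0).
Proof.
move=> Hg r0 r1 g0 HC Hw0 Hc0 Hd Hc.
have bounds : forall a b, (forall i, a <= w0 i <= b) ->
    forall t, 0 <= t -> forall i, a <= w t i <= b.
  move=> a b Hab t t0 i; apply/andP; split.
    suff H : - w t i <= - a by rewrite lerN2 in H.
    apply: (@ode_max R n (fun s k => - w s k) (- a)) => //.
    - by move=> k; rewrite Hw0 lerN2; case/andP: (Hab k).
    - by move=> k; apply: cvgN; apply: Hc0.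
    - by move=> s s0 k; apply: derivableN; exact: (Hd s s0 k).1.
    - move=> s s0 k Hk.
      have -> : derive1 (fun x => - w x k) s = - derive1 (fun x => w x k) s.
        exact: derive.derive1N (Hd s s0 k).1.
      rewrite (Hd s s0 k).2 opprK; apply: Lop_min => // j.
      by have := Hk j; rewrite lerN2.
  apply: (@ode_max R n w b) => //.
  - by move=> k; rewrite Hw0; case/andP: (Hab k).
  - by move=> s s0 k; exact: (Hd s s0 k).1.
  - move=> s s0 k Hk; rewrite (Hd s s0 k).2 oppr_le0; exact: Lop_max.
split; first exact: bounds.
move=> t t0; set N := sup_norm w0.
have hN : forall i, `|w0 i| <= N.
  by move=> i; rewrite /N /sup_norm; apply: (le_bigmax_cond _ (fun j => `|w0 j|)).
have N0 : 0 <= N by rewrite /N /sup_norm; apply: bigmax_ge_id.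
have := bounds (- N) N (fun i => ltac:(rewrite -ler_norml; exact: hN i)) t t0.
move=> Hb; rewrite /sup_norm; apply: bigmax_le => // i _.
by rewrite ler_norml; apply: Hb.
Qed.
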